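(* Let $n\ge 2$ and let $\beta\in B_n$ be a braid whose closure is a knot. Write the unreduced Burau matrix in block form $$\psi_n(\beta)=\begin{pmatrix}\hat\beta_n&b_\beta\\ c_\beta&d_\beta\end{pmatrix}$$ with $\hat\beta_n$ of size $(n-1)\times(n-1)$, $b_\beta$ a column, $c_\beta$ a row and $d_\beta\in\mathbb{Z}[t^{\pm1}]$. Then $\det(I_{n-1}-\hat\beta_n)\neq0$ and, in $\mathbb{Q}(t)$, $$d_\beta+c_\beta(I_{n-1}-\hat\beta_n)^{-1}b_\beta=1.$$
   Context: $\psi_n\colon B_n\to\mathrm{GL}_n(\mathbb{Z}[t^{\pm1}])$ is the unreduced Burau representation sending the Artin generator $\sigma_i$ to $I_{i-1}\oplus\left(\begin{smallmatrix}1-t&t\\1&0\end{smallmatrix}\right)\oplus I_{n-i-1}$; $I_k$ is the $k\times k$ identity matrix. *)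

(* Defs.v *)
From HB Require Import structures.
From mathcomp Require Import all_boot all_order all_algebra.
Set Implicit Arguments. Unset Strict Implicit. Unset Printing Implicit Defensive.
Import Order.TTheory GRing.Theory Num.Theory.
Local Open Scope ring_scope.

(* The field Q(t), containing Z[t^{+-1}]. *)
Definition QT : fieldType := {fraction {poly rat}}.
Definition tvar : QT := FracField.tofrac 'X.

(* A braid word in B_n: a list of letters (i, true) = sigma_i, (i, false) = sigma_i^{-1},
   with i : 'I_(n-1) meaning the generator sigma_{i+1} (0-based index). *)
Definition braid_word (n : nat) := seq ('I_n.-1 * bool).

(* Unreduced Burau image of sigma_{i+1}: block [[1-t, t],[1, 0]] at rows/cols i, i+1. *)
Definition burau_gen (n : nat) (i : nat) : 'M[QT]_n :=
  \matrix_(j < n, k < n)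
    if (j : nat) == i then
      (if (k : nat) == i then 1 - tvar else if (k : nat) == i.+1 then tvar else 0)
    else if (j : nat) == i.+1 then ((k : nat) == i)%:R
    else ((j : nat) == k)%:R.

(* Its inverse: block [[0, 1],[t^{-1}, 1 - t^{-1}]]. *)
Definition burau_gen_inv (n : nat) (i : nat) : 'M[QT]_n :=
  \matrix_(j < n, k < n)
    if (j : nat) == i then ((k : nat) == i.+1)%:R
    else if (j : nat) == i.+1 then
      (if (k : nat) == i then tvar^-1 else if (k : nat) == i.+1 then 1 - tvar^-1 else 0)
    else ((j : nat) == k)%:R.

Definition burau_letter (n : nat) (g : 'I_n.-1 * bool) : 'M[QT]_n :=
  if g.2 then burau_gen n g.1 else burau_gen_inv n g.1.

Definition burau (n : nat) (w : braid_word n) : 'M[QT]_n :=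
  foldr (fun g M => burau_letter g *m M) 1%:M w.

(* Underlying permutation of {0,...,n-1}: sigma_{i+1}^{+-1} acts as transposition (i i+1). *)
Definition swapn (i j : nat) : nat :=
  if j == i then i.+1 else if j == i.+1 then i else j.

Definition braid_perm (n : nat) (w : braid_word n) : nat -> nat :=
  foldr (fun (g : 'I_n.-1 * bool) f => swapn g.1 \o f) id w.

(* The closure of w is a knot (one component) iff its permutation is a single
   n-cycle, i.e. the orbit of strand 0 contains every strand. *)
Definition closure_is_knot (n : nat) (w : braid_word n) : Prop :=
  forall j, (j < n)%N -> exists k, iter k (braid_perm w) 0%N = j.

Definition split_eq (n : nat) (hn : (0 < n)%N) : n = (n.-1 + 1)%N :=
  etrans (esym (prednK hn)) (esym (addn1 n.-1)).

Definition blockify (n : nat) (hn : (0 < n)%N) (A : 'M[QT]_n)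
  : 'M[QT]_(n.-1 + 1) := castmx (split_eq hn, split_eq hn) A.

(* Main.v *)
Require Import Defs.
From HB Require Import structures.
From mathcomp Require Import all_boot all_order all_algebra.
From mathcomp Require Import ring zify.
Set Implicit Arguments. Unset Strict Implicit. Unset Printing Implicit Defensive.
Import GRing.Theory.
Local Open Scope ring_scope.

Notation tf := (@FracField.tofrac _).

Definition ev_rel (f : QT) (r : rat) := exists p q : {poly rat},
  [/\ q.[1] != 0, f = tf p / tf q & r = p.[1] / q.[1]].

Lemma tf_neq0 (q : {poly rat}) : q.[1] != 0 -> tf q != 0 :> QT.
Proof.
move=> h; rewrite tofrac_eq0; apply: contra h => /eqP ->; by rewrite horner0.
Qed.

Lemma ev_uniq f r s : ev_rel f r -> ev_rel f s -> r = s.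
Proof.
move=> [p [q [hq -> ->]]] [p' [q' [hq' E ->]]].
have hq1 := tf_neq0 hq; have hq2 := tf_neq0 hq'.
move/eqP: E; rewrite eqr_div // -!tofracM tofrac_eq => /eqP /(congr1 (horner^~ 1)).
rewrite !hornerM => H.
by apply/eqP; rewrite eqr_div // H.
Qed.

Lemma ev_add f g r s : ev_rel f r -> ev_rel g s -> ev_rel (f + g) (r + s).
Proof.
move=> [p [q [hq -> ->]]] [p' [q' [hq' -> ->]]].
have hq1 := tf_neq0 hq; have hq2 := tf_neq0 hq'.
exists (p * q' + p' * q), (q * q'); split.
- by rewrite hornerM mulf_neq0.
- by rewrite tofracD !tofracM addf_div.
- by rewrite hornerD !hornerM addf_div.
Qed.

Lemma ev_mul f g r s : ev_rel f r -> ev_rel g s -> ev_rel (f * g) (r * s).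
Proof.
move=> [p [q [hq -> ->]]] [p' [q' [hq' -> ->]]].
have hq1 := tf_neq0 hq; have hq2 := tf_neq0 hq'.
exists (p * p'), (q * q'); split.
- by rewrite hornerM mulf_neq0.
- by rewrite !tofracM mulf_div.
- by rewrite !hornerM mulf_div.
Qed.

Lemma ev_opp f r : ev_rel f r -> ev_rel (- f) (- r).
Proof.
move=> [p [q [hq -> ->]]]; exists (- p), q; split => //.
- by rewrite tofracN mulNr.
- by rewrite hornerN mulNr.
Qed.

Lemma ev_poly (p : {poly rat}) : ev_rel (tf p) p.[1].
Proof.
exists p, 1; split; first by rewrite hornerC oner_neq0.
- by rewrite tofrac1 divr1.
- by rewrite hornerC divr1.
Qed.

Lemma ev_0 : ev_rel 0 0.
Proof. by have := ev_poly 0; rewrite tofrac0 horner0. Qed.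
Lemma ev_1 : ev_rel 1 1.
Proof. by have := ev_poly 1; rewrite tofrac1 hornerC. Qed.
Lemma ev_t : ev_rel tvar 1.
Proof. by have := ev_poly 'X; rewrite hornerX. Qed.
Lemma ev_tinv : ev_rel tvar^-1 1.
Proof.
exists 1, 'X; split; first by rewrite hornerX oner_neq0.
- by rewrite tofrac1 div1r.
- by rewrite hornerX hornerC divr1.
Qed.
Lemma ev_nat (b : bool) : ev_rel (b%:R) (b%:R).
Proof. by case: b; [exact: ev_1 | exact: ev_0]. Qed.
Lemma ev_if (b : bool) f g r s : ev_rel f r -> ev_rel g s ->
  ev_rel (if b then f else g) (if b then r else s).
Proof. by case: b. Qed.

Definition mev m n (A : 'M[QT]_(m,n)) (B : 'M[rat]_(m,n)) :=
  forall i j, ev_rel (A i j) (B i j).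

Lemma ev_sum (I : finType) (F : I -> QT) (G : I -> rat) :
  (forall i, ev_rel (F i) (G i)) -> ev_rel (\sum_i F i) (\sum_i G i).
Proof.
move=> h; apply: (@big_ind2 _ _ ev_rel); [exact: ev_0 | move=> ? ? ? ? h1 h2; exact: ev_add h1 h2 | by move=> i _; apply: h].
Qed.

Lemma ev_prod (I : finType) (F : I -> QT) (G : I -> rat) :
  (forall i, ev_rel (F i) (G i)) -> ev_rel (\prod_i F i) (\prod_i G i).
Proof.
move=> h; apply: (@big_ind2 _ _ ev_rel); [exact: ev_1 | move=> ? ? ? ? h1 h2; exact: ev_mul h1 h2 | by move=> i _; apply: h].
Qed.

Lemma mev_mul m n p (A : 'M_(m,n)) (B : 'M_(n,p)) A' B' :
  mev A A' -> mev B B' -> mev (A *m B) (A' *m B').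
Proof.
move=> hA hB i j; rewrite !mxE; apply: ev_sum => k; exact: ev_mul.
Qed.

Lemma mev_sub m n (A B : 'M_(m,n)) A' B' :
  mev A A' -> mev B B' -> mev (A - B) (A' - B').
Proof.
move=> hA hB i j; rewrite !mxE; exact: ev_add (hA i j) (ev_opp (hB i j)).
Qed.

Lemma mev_1 n : mev (1%:M : 'M_n) 1%:M.
Proof. move=> i j; rewrite !mxE; exact: ev_nat. Qed.

Lemma mev_det n (A : 'M_n) A' : mev A A' -> ev_rel (\det A) (\det A').
Proof.
move=> h; rewrite /determinant; apply: ev_sum => s.
apply: ev_mul; last by apply: ev_prod => i; apply: h.
case: (perm.odd_perm s); [exact (ev_opp ev_1) | exact ev_1].
Qed.

Lemma mev_cast m n m' n' (e : (m = m') * (n = n')) A A' :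
  mev A A' -> mev (castmx e A) (castmx e A').
Proof. by move=> h i j; rewrite !castmxE. Qed.

Lemma mev_ul m n (A : 'M_(m + 1, n + 1)) A' : mev A A' -> mev (ulsubmx A) (ulsubmx A').
Proof. by move=> h i j; rewrite !mxE. Qed.

Lemma swapnK i : involutive (swapn i).
Proof.
move=> j; rewrite /swapn.
case: (j =P i) => [->|h1]; first by rewrite eqxx (_ : (i.+1 == i) = false) //; apply/eqP; lia.
case: (j =P i.+1) => [->|h2]; first by rewrite eqxx.
by rewrite (introF eqP h1) (introF eqP h2).
Qed.

Lemma swapn_lt n (i : 'I_n.-1) j : (j < n)%N -> (swapn i j < n)%N.
Proof.
have := ltn_ord i; rewrite /swapn => hi hj.
case: eqP => [_|_]; first lia. case: eqP => _ //; lia.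
Qed.

Lemma braid_perm_lt n (w : braid_word n) j : (j < n)%N -> (braid_perm w j < n)%N.
Proof. elim: w => [|g w IH] //= hj; apply: swapn_lt; exact: IH. Qed.

Definition Qm n (w : braid_word n) : 'M[rat]_n :=
  \matrix_(j < n, k < n) (braid_perm w k == j)%:R.

Definition Sg n (i : 'I_n.-1) : 'M[rat]_n :=
  \matrix_(j < n, k < n) (swapn i k == j)%:R.

Lemma Qm_cons n g (w : braid_word n) : Qm (g :: w) = Sg g.1 *m Qm w.
Proof.
apply/matrixP => j k; rewrite !mxE.
have hk := braid_perm_lt w (ltn_ord k).
rewrite (bigD1 (Ordinal hk)) //= big1 ?addr0.
  by rewrite !mxE eqxx mulr1.
move=> l /negbTE hl; rewrite !mxE.
have -> : (braid_perm w k == l) = false.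
  by apply: contraFF hl => /eqP h; apply/eqP/val_inj.
by rewrite mulr0.
Qed.

Lemma ev_eq f r s : ev_rel f r -> r = s -> ev_rel f s.
Proof. by move=> h <-. Qed.

Lemma nat_case1 (a b c : nat) :
  (if a == c then (if b == c then 1 - 1 else if b == c.+1 then 1 else 0)
   else if a == c.+1 then (b == c)%:R else (a == b)%:R : rat)
  = ((if b == c then c.+1 else if b == c.+1 then c else b) == a)%:R.
Proof.
case E1: (a == c); case E2: (b == c); case E3: (b == c.+1); case E4: (a == c.+1);
case E5: (c.+1 == a); case E6: (c == a); case E7: (b == a); case E8: (a == b);
rewrite /= ?subrr //; exfalso; lia.
Qed.

Lemma nat_case2 (a b c : nat) :
  (if a == c then (b == c.+1)%:R
   else if a == c.+1 then (if b == c then 1 else if b == c.+1 then 1 - 1 else 0)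
   else (a == b)%:R : rat)
  = ((if b == c then c.+1 else if b == c.+1 then c else b) == a)%:R.
Proof.
case E1: (a == c); case E2: (b == c); case E3: (b == c.+1); case E4: (a == c.+1);
case E5: (c.+1 == a); case E6: (c == a); case E7: (b == a); case E8: (a == b);
rewrite /= ?subrr //; exfalso; lia.
Qed.

Lemma mev_letter n (g : 'I_n.-1 * bool) : mev (burau_letter g) (Sg g.1).
Proof.
case: g => i [] j k; rewrite /burau_letter /= !mxE.
- apply: ev_eq; last exact: nat_case1.
  apply: ev_if; [apply: ev_if; [exact: ev_add ev_1 (ev_opp ev_t) | apply: ev_if; [exact: ev_t|exact: ev_0]]
    | apply: ev_if; exact: ev_nat].
- apply: ev_eq; last exact: nat_case2.
  apply: ev_if; [exact: ev_nat | apply: ev_if; last exact: ev_nat].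
  apply: ev_if; [exact: ev_tinv | apply: ev_if; [exact: ev_add ev_1 (ev_opp ev_tinv) | exact: ev_0]].
Qed.

Lemma mev_burau n (w : braid_word n) : mev (burau w) (Qm w).
Proof.
elim: w => [|g w IH].
  move=> j k; rewrite !mxE eq_sym; exact: ev_nat.
rewrite Qm_cons /=; apply: mev_mul => //; exact: mev_letter.
Qed.

Lemma cycle_zero (n : nat) (f : nat -> nat) (y : nat -> rat) :
  (0 < n)%N ->
  (forall m, (m < n)%N -> (f m < n)%N) ->
  (forall m, (m < n.-1)%N -> y m = y (f m)) -> y n.-1 = 0 ->
  (exists2 p, (0 < p)%N & iter p f 0%N = 0%N) ->
  (forall j, (j < n)%N -> exists k, iter k f 0%N = j) ->
  forall j, (j < n)%N -> y j = 0.
Proof.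
move=> hn hf hy hN [p hp0 hp] knot j hj.
have inr : forall m, (iter m f 0%N < n)%N.
  by elim=> [|m IH] //=; apply: hf.
have chain : forall d m, iter (m + d) f 0%N = n.-1 -> y (iter m f 0%N) = 0.
  elim=> [|d IH] m; first by rewrite addn0 => ->.
  move=> h; case: (iter m f 0%N =P n.-1) => [-> //|ne].
  have := inr m => hm.
  rewrite hy; last by lia.
  rewrite -iterS; apply: IH; by rewrite addSnnS.
have [b hb] := knot j hj.
have [a ha] : exists a, iter a f 0%N = n.-1 by apply: knot; lia.
have per : forall b, iter (b * p) f 0%N = 0%N.
  by elim=> [|c IH] //; rewrite mulSn iterD IH hp.
rewrite -hb; apply: (chain (a + b * p - b)%N).
have -> : (b + (a + b * p - b) = a + b * p)%N by nia.
by rewrite iterD per.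
Qed.

Definition braid_inv n (w : braid_word n) : nat -> nat :=
  foldr (fun (g : 'I_n.-1 * bool) f => f \o swapn g.1) id w.

Lemma braid_invK n (w : braid_word n) x : braid_perm w (braid_inv w x) = x.
Proof. elim: w x => [|g w IH] x //=; by rewrite IH swapnK. Qed.

Lemma braid_inv_lt n (w : braid_word n) j : (j < n)%N -> (braid_inv w j < n)%N.
Proof. elim: w j => [|g w IH] j //= hj; apply: IH; exact: swapn_lt. Qed.

Lemma det_Qhat n (hn : (0 < n)%N) (w : braid_word n) : closure_is_knot w ->
  \det (1%:M - ulsubmx (castmx (split_eq hn, split_eq hn) (Qm w))) != 0.
Proof.
move=> knot; apply/negP => /det0P [v vn0 hv].
set Qh := ulsubmx _ in hv.
have hQ : forall j k : 'I_n.-1, Qh j k = (braid_perm w k == j)%:R.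
  by move=> j k; rewrite /Qh !mxE castmxE !mxE /=.
have ev : v = v *m Qh.
  by apply/eqP; rewrite -subr_eq0 -{1}(mulmx1 v) -mulmxBr hv.
pose y (m : nat) : rat := if insub m is Some j then v 0 j else 0.
have yv : forall j : 'I_n.-1, y j = v 0 j by move=> j; rewrite /y valK.
have yN : forall m, (n.-1 <= m)%N -> y m = 0.
  by move=> m hm; rewrite /y insubN // -leqNgt.
have rel : forall k : 'I_n.-1, v 0 k = y (braid_perm w k).
  move=> k; rewrite {1}ev mxE.
  case: (ltnP (braid_perm w k) n.-1) => hk.
    rewrite (bigD1 (Ordinal hk)) //= big1 ?addr0.
      by rewrite hQ eqxx mulr1 -yv.
    move=> l /negbTE hl; rewrite hQ.
    have -> : (braid_perm w k == l) = false.
      by apply: contraFF hl => /eqP h; apply/eqP/val_inj.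
    by rewrite mulr0.
  rewrite yN // big1 // => l _; rewrite hQ.
  have -> : (braid_perm w k == l) = false.
    by apply/eqP => h; move: (ltn_ord l); rewrite -h; lia.
  by rewrite mulr0.
have y0 : forall j, (j < n)%N -> y j = 0.
  apply: (cycle_zero (f := braid_perm w)) => //.
  - by move=> m; exact: braid_perm_lt.
  - by move=> m hm; rewrite -[m]/(val (Ordinal hm)) yv rel.
  - by rewrite yN.
  - have [k hk] := knot _ (braid_inv_lt w hn).
    by exists k.+1 => //; rewrite iterS hk braid_invK.
apply/negP: vn0; apply/negPn/eqP/matrixP => i j.
rewrite (ord1 i) -yv y0 ?mxE //; have := ltn_ord j; lia.
Qed.

Lemma sum_delta n c (x : QT) : (c < n)%N -> \sum_(k < n) ((k : nat) == c)%:R * x = x.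
Proof.
move=> hc; rewrite (bigD1 (Ordinal hc)) //= eqxx mul1r big1 ?addr0 //.
move=> k hk; have -> : ((k : nat) == c) = false; last by rewrite mul0r.
by apply: contraFF (negbTE hk) => /eqP h; apply/eqP/val_inj.
Qed.

Lemma sum_delta1 n c : (c < n)%N -> \sum_(k < n) (((k : nat) == c)%:R : QT) = 1.
Proof. move=> hc; rewrite -[RHS](sum_delta 1 hc); apply: eq_bigr => k _; by rewrite mulr1. Qed.

Lemma sum_two n c (x y : QT) : (c.+1 < n)%N ->
  \sum_(k < n) (if (k : nat) == c then x else if (k : nat) == c.+1 then y else 0) = x + y.
Proof.
move=> hc.
rewrite (eq_bigr (fun k : 'I_n => ((k : nat) == c)%:R * x + ((k : nat) == c.+1)%:R * y)).
  rewrite big_split /= sum_delta ?sum_delta //; lia.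
move=> k _; case E1: ((k : nat) == c); case E2: ((k : nat) == c.+1);
  rewrite /= ?mul1r ?mul0r ?addr0 ?add0r //; exfalso; lia.
Qed.

Lemma lt_aux1 n i : (i < n.-1)%N -> (i.+1 < n)%N. Proof. lia. Qed.
Lemma lt_aux2 n i : (i < n.-1)%N -> (i < n)%N. Proof. lia. Qed.

Lemma rowsum_letter n (g : 'I_n.-1 * bool) :
  burau_letter g *m const_mx 1 = const_mx 1 :> 'cV[QT]_n.
Proof.
apply/matrixP => j z; rewrite !mxE.
have hj := ltn_ord j.
case: g => i [] /=; rewrite /burau_letter /=;
  under eq_bigr => k _ do rewrite !mxE mulr1;
  have hi := ltn_ord i.
- case: (nat_of_ord j =P nat_of_ord i) => _.
    rewrite sum_two; first exact: subrK.
    exact: lt_aux1 hi.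
  case: (nat_of_ord j =P (nat_of_ord i).+1) => _.
    rewrite sum_delta1 //; exact: lt_aux2 hi.
  under eq_bigr => k _ do rewrite eq_sym.
  by rewrite sum_delta1.
- case: (nat_of_ord j =P nat_of_ord i) => _.
    rewrite sum_delta1 //; exact: lt_aux1 hi.
  case: (nat_of_ord j =P (nat_of_ord i).+1) => _.
    rewrite sum_two; first by rewrite addrC subrK.
    exact: lt_aux1 hi.
  under eq_bigr => k _ do rewrite eq_sym.
  by rewrite sum_delta1.
Qed.
Lemma rowsum_burau n (w : braid_word n) : burau w *m const_mx 1 = const_mx 1 :> 'cV[QT]_n.
Proof.
elim: w => [|g w IH] /=; first by rewrite mul1mx.
by rewrite -mulmxA IH rowsum_letter.
Qed.

Lemma rowsum_cast n m (e : n = m) (A : 'M[QT]_n) :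
  A *m const_mx 1 = const_mx 1 :> 'cV_n -> castmx (e, e) A *m const_mx 1 = const_mx 1 :> 'cV_m.
Proof. by case: m / e; rewrite castmx_id. Qed.

Lemma const11 : const_mx 1 = 1%:M :> 'M[QT]_1.
Proof. by apply/matrixP => i j; rewrite (ord1 i) (ord1 j) !mxE. Qed.

Theorem mainTheorem7 (n : nat) (hn : (2 <= n)%N) (w : braid_word n) :
  closure_is_knot w ->
  let P := blockify (ltnW hn) (burau w) in
  let bhat := ulsubmx P in
  let b := ursubmx P in
  let c := dlsubmx P in
  let d := drsubmx P in
  \det (1%:M - bhat) != 0 /\
  d + c *m invmx (1%:M - bhat) *m b = 1%:M.
Proof.
move=> knot P bhat b c d.
have hdet : \det (1%:M - bhat) != 0.
  have hm : mev (1%:M - bhat)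
      (1%:M - ulsubmx (castmx (split_eq (ltnW hn), split_eq (ltnW hn)) (Qm w))).
    apply: mev_sub; first exact: mev_1.
    apply: mev_ul; apply: mev_cast; exact: mev_burau.
  have hd := mev_det hm.
  apply/eqP => h0; move: hd; rewrite h0 => hd.
  have := det_Qhat (ltnW hn) knot.
  by rewrite -(ev_uniq ev_0 hd) eqxx.
split => //.
have hP : P *m const_mx 1 = const_mx 1 :> 'cV[QT]_(n.-1 + 1).
  by rewrite /P /blockify; apply: rowsum_cast; exact: rowsum_burau.
move: hP; rewrite -(submxK P) -!col_mx_const mul_block_col => /eq_col_mx [h1 h2].
rewrite const11 !mulmx1 in h1 h2.
have hb : b = (1%:M - bhat) *m const_mx 1.
  by rewrite mulmxBl mul1mx -{1}h1 addrC addKr.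
have hu : (1%:M - bhat) \in unitmx by rewrite unitmxE unitfE.
by rewrite -mulmxA hb mulKmx // addrC.
Qed.
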